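(* Let $f:\{0,1\}^n\to\{0,1\}$ be a read-once DNF formula with $m$ terms, each containing exactly $n/m$ variables (so every variable occurs in exactly one term). Under unit costs ($c_i=1$ for all $i$) and an arbitrary probability vector $p\in(0,1)^n$, there is a non-adaptive strategy $S$ with $$\mathrm{cost}_{c,p}(f,S)\le m\cdot \mathsf{OPT}_{\mathcal A}(f,c,p).$$
   Context: Stochastic Boolean Function Evaluation (SBFE) setup: $f:\{0,1\}^n\to\{0,1\}$ is a known Boolean function, $c\in\mathbb{R}_{>0}^n$ a cost vector and $p\in(0,1)^n$ a probability vector. The unknown input $x\in\{0,1\}^n$ is random with independent coordinates and $\Pr(x_i=1)=p_i$. The value $x_i$ can only be learned by testing variable $i$, at cost $c_i$. A strategy tests variables sequentially until $f(x)$ is determined, i.e. until $f(x')=f(x)$ for every $x'$ agreeing with $x$ on all tested coordinates. An adaptive strategy is a decision tree (the next test may depend on previous outcomes); a non-adaptive strategy is a fixed permutation of $[n]$, with variables tested in that order until $f(x)$ is determined. $\mathrm{cost}_{c,p}(f,S)$ is the expected total cost of tests performed by $S$ for random $x$. $\mathsf{OPT}_{\mathcal A}(f,c,p)$ (resp. $\mathsf{OPT}_{\mathcal N}(f,c,p)$) is the minimum of $\mathrm{cost}_{c,p}(f,S)$ over all adaptive (resp. non-adaptive) strategies. A DNF formula is a disjunction of terms, each a conjunction of literals; it is read-once if no variable is negated and distinct terms contain disjoint sets of variables. *)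

(* Defs.v *)
From HB Require Import structures.
From mathcomp Require Import all_boot all_order all_algebra all_fingroup.
Set Implicit Arguments. Unset Strict Implicit. Unset Printing Implicit Defensive.
Import Order.TTheory GRing.Theory Num.Theory.
Local Open Scope ring_scope.

Section SBFE.
Variables (R : realFieldType) (n : nat).

Definition input := {ffun 'I_n -> bool}.

Definition prob (p : 'I_n -> R) (x : input) : R :=
  \prod_(i < n) (if x i then p i else 1 - p i).

Definition determined (f : input -> bool) (x : input) (T : {set 'I_n}) : bool :=
  [forall y : input, [forall i in T, y i == x i] ==> (f y == f x)].

Inductive dtree : Type :=
  | Leaf : dtree
  | Node : 'I_n -> dtree -> dtree -> dtree.  (* test i; left child if x_i = 0, right if x_i = 1 *)

Fixpoint tree_cost (f : input -> bool) (c : 'I_n -> R) (t : dtree)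
    (x : input) (T : {set 'I_n}) : R :=
  if determined f x T then 0 else
  match t with
  | Leaf => 0
  | Node i t0 t1 => c i + tree_cost f c (if x i then t1 else t0) x (i |: T)
  end.

Fixpoint tree_valid (f : input -> bool) (t : dtree) (x : input) (T : {set 'I_n}) : bool :=
  determined f x T ||
  match t with
  | Leaf => false
  | Node i t0 t1 => tree_valid f (if x i then t1 else t0) x (i |: T)
  end.

Definition adaptive_strategy (f : input -> bool) (t : dtree) : Prop :=
  forall x : input, tree_valid f t x set0.

Definition cost_adaptive (f : input -> bool) (c p : 'I_n -> R) (t : dtree) : R :=
  \sum_(x : input) prob p x * tree_cost f c t x set0.

(* Non-adaptive strategies: permutations s of [n]; variable s k is tested at step k.
   The variables tested before step k form the prefix set. *)
Definition prefix (s : {perm 'I_n}) (k : 'I_n) : {set 'I_n} :=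
  [set s j | j : 'I_n & (j < k)%N].

Definition cost_nonadaptive (f : input -> bool) (c p : 'I_n -> R) (s : {perm 'I_n}) : R :=
  \sum_(x : input) prob p x *
     \sum_(k < n) (if determined f x (prefix s k) then 0 else c (s k)).

Definition dnf (m : nat) (terms : 'I_m -> {set 'I_n}) (x : input) : bool :=
  [exists j : 'I_m, [forall i in terms j, x i]].

End SBFE.

(* Main.v *)
Require Import Defs.
From HB Require Import structures.
From mathcomp Require Import all_boot all_order all_algebra all_fingroup.
From mathcomp Require Import ring lra zify.
Set Implicit Arguments. Unset Strict Implicit. Unset Printing Implicit Defensive.
Import Order.TTheory GRing.Theory Num.Theory.
Local Open Scope ring_scope.

Section Prob.
Variables (R : realFieldType) (n : nat) (p : 'I_n -> R).
Hypothesis hp : forall i, 0 < p i < 1.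

Definition w (i : 'I_n) (b : bool) : R := if b then p i else 1 - p i.

Lemma w_ge0 i b : 0 <= w i b.
Proof. by case/andP: (hp i) => h0 h1; rewrite /w; case: b; [apply: ltW | rewrite subr_ge0 ltW]. Qed.

Lemma prob_ge0 (x : input n) : 0 <= prob p x.
Proof. by apply: prodr_ge0 => i _; exact: (w_ge0 i (x i)). Qed.

Definition flip (i : 'I_n) (x : input n) : input n :=
  [ffun j => if j == i then ~~ x i else x j].

Lemma flipK i : involutive (flip i).
Proof. by move=> x; apply/ffunP => j; rewrite !ffunE; case: eqP => [->|]; rewrite ?eqxx ?negbK. Qed.

Lemma flip_i i x : flip i x i = ~~ x i.
Proof. by rewrite ffunE eqxx. Qed.

Lemma flip_j i j x : j != i -> flip i x j = x j.
Proof. by rewrite ffunE => /negbTE ->. Qed.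

Lemma prob_split i (x : input n) :
  prob p x = w i (x i) * \prod_(j < n | j != i) w j (x j).
Proof. by rewrite /prob (bigD1 i) //. Qed.

Lemma prob_flip i (x : input n) : x i ->
  prob p (flip i x) * p i = prob p x * (1 - p i).
Proof.
move=> xi; rewrite !(prob_split i) flip_i xi /w /=.
rewrite (eq_bigr (fun j => w j (x j))); last by move=> j ji; rewrite flip_j.
by rewrite /w; ring.
Qed.

Definition indep (W : pred (input n)) (i : 'I_n) := forall x, W (flip i x) = W x.

Lemma peel1 (W : pred (input n)) i : indep W i ->
  \sum_(x | W x && x i) prob p x = p i * \sum_(x | W x) prob p x.
Proof.
move=> hW.
rewrite [X in _ = _ * X](bigID (fun x : input n => x i)) /=.
have -> : \sum_(x | W x && ~~ x i) prob p x = \sum_(x | W x && x i) prob p (flip i x).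
  rewrite (reindex_inj (can_inj (flipK i))) /=.
  by apply: eq_bigl => x; rewrite hW flip_i negbK.
rewrite mulrDr.
have -> : p i * \sum_(x | W x && x i) prob p (flip i x) =
          (1 - p i) * \sum_(x | W x && x i) prob p x.
  rewrite !mulr_sumr; apply: eq_bigr => x /andP[_ xi].
  by rewrite mulrC prob_flip // mulrC.
by rewrite -mulrDl addrC subrK mul1r.
Qed.

Definition allx (x : input n) (s : seq 'I_n) := all (fun i => x i) s.

Lemma peel (s : seq 'I_n) (W : pred (input n)) : uniq s ->
  (forall i, i \in s -> indep W i) ->
  \sum_(x | W x && allx x s) prob p x = (\prod_(i <- s) p i) * \sum_(x | W x) prob p x.
Proof.
elim: s W => [|a s IH] W /=.
  by move=> _ _; rewrite big_nil mul1r; apply: eq_bigl => x; rewrite andbT.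
case/andP=> as_ us hW.
rewrite big_cons -mulrA -IH //; last by move=> i iin; apply: hW; rewrite inE iin orbT.
rewrite -(peel1 (W := fun x => W x && allx x s)).
  by apply: eq_bigl => x; rewrite /allx /= -andbA [x a && _]andbC.
move=> x /=; rewrite hW ?inE ?eqxx //; congr andb.
apply: eq_in_all => i iin; rewrite flip_j //; apply: contraNneq as_ => <-; exact: iin.
Qed.


Fixpoint Gs (s : seq 'I_n) : R :=
  if s is a :: s' then 1 + p a * Gs s' else 0.

Lemma p_ge0 i : 0 <= p i. Proof. by case/andP: (hp i) => /ltW. Qed.
Lemma p_le1 i : p i <= 1. Proof. by case/andP: (hp i) => _ /ltW. Qed.

Lemma Gs_sum s : Gs s = \sum_(r < size s) \prod_(i <- take r s) p i.
Proof.
elim: s => [|a s IH] /=; first by rewrite big_ord0.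
rewrite big_ord_recl /= big_nil IH mulr_sumr; congr (_ + _).
by apply: eq_bigr => r _; rewrite /bump /= big_cons.
Qed.

Definition lep := fun a b : 'I_n => p a <= p b.

Lemma lep_trans : transitive lep.
Proof. by move=> b a c; rewrite /lep; apply: le_trans. Qed.

Lemma lep_total : total lep.
Proof. by move=> a b; rewrite /lep le_total. Qed.

Lemma Gs_ge0 s : 0 <= Gs s.
Proof. by elim: s => //= a s IH; apply: addr_ge0 => //; apply: mulr_ge0 => //; apply: p_ge0. Qed.

Lemma Gs_ineq s i : sorted lep s -> i \in s -> Gs s <= 1 + p i * Gs (rem i s).
Proof.
elim: s => [|a s IH] //= srt; rewrite inE; case: eqP => [->|ne] /=.
  by rewrite eqxx.
move=> iin; have {ne} ne : a != i by apply/eqP=> e; apply: ne; rewrite e.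
rewrite ifN //= .
have hai : p a <= p i.
  by have /allP := order_path_min lep_trans srt; apply.
have := IH (path_sorted srt) iin => h.
have h2 : p a * Gs s <= p a * (1 + p i * Gs (rem i s)) by apply: ler_wpM2l => //; apply: p_ge0.
have h3 : 0 <= p a * Gs (rem i s) by apply: mulr_ge0; [apply: p_ge0 | apply: Gs_ge0].
have h4 : 0 <= p i * Gs (rem i s) by apply: mulr_ge0; [apply: p_ge0 | apply: Gs_ge0].
have : p a * (1 + p i * Gs (rem i s)) <= p i * (1 + p a * Gs (rem i s)).
  rewrite !mulrDr !mulr1 mulrCA; lra.
lra.
Qed.

Definition gs (s : seq 'I_n) : R := Gs s - (size s)%:R * \prod_(i <- s) p i.

Lemma gs_ineq s i : sorted lep s -> i \in s ->
  gs s - p i * gs (rem i s) <= 1 - \prod_(j <- s) p j.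
Proof.
move=> srt iin.
have hP : \prod_(j <- s) p j = p i * \prod_(j <- rem i s) p j.
  by rewrite (perm_big _ (perm_to_rem iin)) big_cons.
have hs : size s = (size (rem i s)).+1.
  by rewrite size_rem // prednK // -has_predT; apply/hasP; exists i.
rewrite /gs hP hs; have := Gs_ineq srt iin.
rewrite -natr1.
set P := \prod_(j <- rem i s) p j; set k := (size (rem i s))%:R.
move=> h.
have: 0 <= k by rewrite /k ler0n.
move: (Gs s) (Gs (rem i s)) h => a b h _.
nra.
Qed.

End Prob.

Section Tree.
Variables (R : realFieldType) (n : nat) (p : 'I_n -> R).
Hypothesis hp : forall i, 0 < p i < 1.
Variable f : input n -> bool.

Definition meas (T : {set 'I_n}) (D : pred (input n)) :=
  forall x y : input n, (forall i, i \in T -> x i = y i) -> D x = D y.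

Lemma det_agree (T : {set 'I_n}) (x y : input n) : (forall i, i \in T -> x i = y i) ->
  determined f x T -> determined f y T.
Proof.
move=> hxy /forallP hx; apply/forallP => z; apply/implyP => /forallP hz.
have fz : f z = f x.
  apply/eqP; apply: (implyP (hx z)); apply/forallP => i; apply/implyP => iT.
  by have := implyP (hz i) iT => /eqP ->; rewrite hxy.
have fy : f y = f x.
  apply/eqP; apply: (implyP (hx y)); apply/forallP => i; apply/implyP => iT.
  by rewrite hxy.
by rewrite fz fy.
Qed.

Lemma det_meas (T : {set 'I_n}) : meas T (fun x => determined f x T).
Proof.
move=> x y hxy; apply/idP/idP; first exact: det_agree.
by apply: det_agree => i iT; rewrite hxy.
Qed.

Variable Phi : input n -> {set 'I_n} -> R.
Hypothesis H1 : forall x T, determined f x T -> Phi x T <= 0.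
Hypothesis H2 : forall T i (D : pred (input n)), meas T D ->
  \sum_(x | D x) prob p x * Phi x T <= \sum_(x | D x) prob p x * (1 + Phi x (i |: T)).

Lemma tree_lb (t : dtree n) : forall T (D : pred (input n)), meas T D ->
  (forall x, D x -> tree_valid f t x T) ->
  \sum_(x | D x) prob p x * Phi x T <=
  \sum_(x | D x) prob p x * tree_cost f (fun _ => 1) t x T.
Proof.
elim: t => [|i t0 IH0 t1 IH1] T D hD hv.
  apply: ler_sum => x Dx.
  have d : determined f x T by have := hv x Dx; rewrite /= orbF.
  rewrite /= d mulr0; apply: mulr_ge0_le0; [exact: prob_ge0 | exact: H1].
rewrite (bigID (fun x => determined f x T)) [X in _ <= X](bigID (fun x => determined f x T)) /=.
apply: lerD.
  apply: ler_sum => x /andP[_ d]; rewrite /= d mulr0.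
  apply: mulr_ge0_le0; [exact: prob_ge0 | exact: H1].
have hD' : meas T (fun x => D x && ~~ determined f x T).
  by move=> x y hxy /=; rewrite (hD x y hxy) (det_meas hxy).
apply: le_trans (H2 i hD') _.
rewrite [X in _ <= X](eq_bigr (fun x => prob p x * (1 + tree_cost f (fun _ => 1) (if x i then t1 else t0) x (i |: T)))); last first.
  by move=> x /andP[_ /negbTE d]; rewrite /= d.
rewrite /=.
rewrite [X in X <= _]big_mkcond [X in _ <= X]big_mkcond /=.
rewrite -!big_mkcond /=.
under eq_bigr do rewrite mulrDr.
under [X in _ <= X]eq_bigr do rewrite mulrDr.
rewrite !big_split /=; apply: lerD => //.
rewrite (bigID (fun x : input n => x i)) [X in _ <= X](bigID (fun x : input n => x i)) /=.
have hm1 : meas (i |: T) (fun x => (D x && ~~ determined f x T) && x i).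
  move=> x y hxy; rewrite (hD' x y) ?(hxy i) ?setU11 // => j jT.
  by apply: hxy; rewrite setU1r.
have hm0 : meas (i |: T) (fun x => (D x && ~~ determined f x T) && ~~ x i).
  move=> x y hxy; rewrite (hD' x y) ?(hxy i) ?setU11 // => j jT.
  by apply: hxy; rewrite setU1r.
apply: lerD.
  apply: le_trans (IH1 (i |: T) _ hm1 _) _.
    move=> x /andP[/andP[Dx d] xi].
    by have := hv x Dx; rewrite /= (negbTE d) xi.
  by apply: ler_sum => x /andP[_ xi]; rewrite xi.
apply: le_trans (IH0 (i |: T) _ hm0 _) _.
  move=> x /andP[/andP[Dx d] xi].
  by have := hv x Dx; rewrite /= (negbTE d) (negbTE xi).
by apply: ler_sum => x /andP[_ xi]; rewrite (negbTE xi).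
Qed.

End Tree.

Section DNF.
Variables (R : realFieldType) (n m : nat) (terms : 'I_m -> {set 'I_n}) (p : 'I_n -> R).
Hypothesis hp : forall i, 0 < p i < 1.
Hypothesis hdisj : forall j1 j2 : 'I_m, j1 != j2 -> [disjoint terms j1 & terms j2].
Variable k : nat.
Hypothesis hk : forall j, #|terms j| = k.
Hypothesis hcov : forall i : 'I_n, exists j : 'I_m, i \in terms j.

Notation f := (dnf terms).

Definition sat (x : input n) j := [forall i in terms j, x i].
Definition srt j := sort (lep p) (enum (terms j)).

Lemma srt_uniq j : uniq (srt j). Proof. by rewrite sort_uniq enum_uniq. Qed.
Lemma mem_srt j i : (i \in srt j) = (i \in terms j). Proof. by rewrite mem_sort mem_enum. Qed.
Lemma srt_sorted j : sorted (lep p) (srt j). Proof. exact: (sort_sorted (lep_total p)). Qed.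
Lemma size_srt j : size (srt j) = k. Proof. by rewrite size_sort -cardE hk. Qed.

Lemma sat_allx x j : sat x j = allx x (srt j).
Proof.
apply/forall_inP/allP => h i; first by rewrite mem_srt; apply: h.
by move=> it; apply: h; rewrite mem_srt.
Qed.

Lemma not_in_other i j0 j : i \in terms j0 -> j != j0 -> i \notin terms j.
Proof.
move=> ij0 ne; by rewrite (disjointFl (hdisj ne) ij0).
Qed.

Definition O j (x : input n) := [forall j', (j' != j) ==> ~~ sat x j'].
Definition opn j (x : input n) (T : {set 'I_n}) := [forall i in T :&: terms j, x i].
Definition L j (T : {set 'I_n}) := [seq i <- srt j | i \notin T].
Definition h j x T := if opn j x T then gs p (L j T) else 0.
Definition Phi2 x T := \sum_(j < m) (O j x)%:R * h j x T.
Definition M x T := (\max_(j | sat x j) #|T :&: terms j|)%N.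
Definition Phi1 x T : R := if f x then k%:R - (M x T)%:R else 0.
Definition Phi x T := Phi1 x T + Phi2 x T.

Lemma D2 x T : determined f x T -> f x -> exists j, terms j \subset T /\ sat x j.
Proof.
move=> /forallP /(_ [ffun i => (i \in T) && x i]) /implyP hd fx.
have : f [ffun i => (i \in T) && x i].
  rewrite (eqP (hd _)) //; apply/forall_inP => i iT; by rewrite ffunE iT.
case/existsP => j /forall_inP hj; exists j; split.
  by apply/subsetP => i /hj; rewrite ffunE => /andP[].
by apply/forall_inP => i /hj; rewrite ffunE => /andP[].
Qed.

Lemma D3 x T : determined f x T -> ~~ f x -> forall j, ~~ opn j x T.
Proof.
move=> /forallP /(_ [ffun i => (i \notin T) || x i]) /implyP hd fx j.
have : ~~ f [ffun i => (i \notin T) || x i].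
  rewrite (eqP (hd _)) //; apply/forall_inP => i iT; by rewrite ffunE iT.
move/existsPn /(_ j) /forall_inPn => [i it]; rewrite ffunE negb_or negbK => /andP[iT xi].
apply/forall_inP => /(_ i); rewrite inE iT it => /(_ isT); exact/negP.
Qed.

Lemma gs_nil : gs p [::] = 0.
Proof. by rewrite /gs /= big_nil mulr1 subr0. Qed.

Lemma H1 x T : determined f x T -> Phi x T <= 0.
Proof.
move=> d; rewrite /Phi /Phi1.
case fx: (f x).
  have [j0 [sub sj0]] := D2 d fx.
  have hM : (k <= M x T)%N.
    rewrite -(hk j0) -{1}(setIidPr sub).
    by apply: (leq_bigmax_cond (F := fun j => #|T :&: terms j|)).
  have -> : Phi2 x T = 0.
    rewrite /Phi2 big1 // => j _.
    case: (eqVneq j j0) => [->|ne].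
      rewrite /h; case: ifP => _; last by rewrite mulr0.
      have -> : L j0 T = [::].
        apply/eqP; rewrite -(size_eq0) size_filter; apply/eqP.
        apply/eqP; rewrite -leqn0 leqNgt -has_count; apply/hasP => -[i].
        by rewrite mem_srt => /(subsetP sub) ->.
      by rewrite gs_nil mulr0.
    have -> : O j x = false.
      apply/negbTE/forallPn; exists j0; rewrite negb_imply negbK sj0 andbT eq_sym.
      exact: ne.
    by rewrite mul0r.
  rewrite addr0 subr_le0 ler_nat; exact: hM.
have -> : Phi2 x T = 0.
  rewrite /Phi2 big1 // => j _.
  by rewrite /h (negbTE (D3 d (negbT fx) j)) mulr0.
by rewrite addr0.
Qed.


Lemma Phi1_step x T i : Phi1 x T <= (f x)%:R + Phi1 x (i |: T).
Proof.
rewrite /Phi1; case: (f x); last by rewrite addr0.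
suff hM : (M x (i |: T) <= (M x T).+1)%N.
  rewrite -(ler_nat R) -natr1 in hM. rewrite /= ?mulr1n. lra.
apply/bigmax_leqP => j sj.
apply: (@leq_trans (#|T :&: terms j|).+1); last first.
  by rewrite ltnS; apply: (leq_bigmax_cond (F := fun j => #|T :&: terms j|)).
apply: (@leq_trans #|i |: (T :&: terms j)|).
  apply: subset_leq_card; apply/subsetP => i'; rewrite !inE => /andP[/orP[->|->] ->] //.
  by rewrite orbT.
by rewrite cardsU1; case: (i \notin _).
Qed.

Lemma flip_agree i (x : input n) (A : {set 'I_n}) : i \notin A ->
  [forall i' in A, flip i x i'] = [forall i' in A, x i'].
Proof.
move=> iA; apply: eq_forallb_in => i' i'A; rewrite flip_j //.
by apply: contraNneq iA => <-.
Qed.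

Lemma h_other x T i j0 j : i \in terms j0 -> j != j0 -> h j x (i |: T) = h j x T.
Proof.
move=> ij0 ne; have nij := not_in_other ij0 ne. rewrite /h /opn.
have -> : (i |: T) :&: terms j = T :&: terms j.
  apply/setP => i'; rewrite !inE; case: eqP => [->|] //.  by rewrite (negbTE nij) !andbF.
have -> : L j (i |: T) = L j T.
  apply: eq_in_filter => i'; rewrite mem_srt !inE => i't.
  by case: eqP => // e; move: nij; rewrite -e i't.
by [].
Qed.

Lemma opn_step x T i j0 : i \in terms j0 -> opn j0 x (i |: T) = opn j0 x T && x i.
Proof.
move=> ij0; apply/forall_inP/andP.
  move=> hh; split; first by apply/forall_inP => i' /setIP[i'T i't]; apply: hh; rewrite !inE i'T i't orbT.
  by apply: hh; rewrite !inE eqxx ij0.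
case=> /forall_inP hh xi i'; rewrite !inE => /andP[/orP[/eqP->|i'T] i't] //.
by apply: hh; rewrite inE i'T.
Qed.

Lemma L_step T i j0 : L j0 (i |: T) = rem i (L j0 T).
Proof.
rewrite rem_filter; last by apply: filter_uniq; apply: srt_uniq.
rewrite /L -filter_predI; apply: eq_filter => i' /=; rewrite !inE negb_or.
by rewrite andbC.
Qed.

Lemma sum_mkcond (D P : pred (input n)) (F : input n -> R) :
  \sum_(x | D x) (P x)%:R * F x = \sum_(x | D x && P x) F x.
Proof.
rewrite [RHS]big_mkcondr /=; apply: eq_bigr => x _.
by case: (P x); rewrite ?mul1r ?mul0r.
Qed.

Lemma Phi2_step T i (D : pred (input n)) : meas T D ->
  \sum_(x | D x) prob p x * Phi2 x T <=
  \sum_(x | D x) prob p x * ((~~ f x)%:R + Phi2 x (i |: T)).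
Proof.
move=> hD.
case: (boolP (i \in T)) => iT.
  have -> : i |: T = T by apply/setUidPr; rewrite sub1set.
  apply: ler_sum => x _; apply: ler_wpM2l; first exact: prob_ge0.
  by rewrite lerDr ler0n.
have [j0 ij0] := hcov i.
have eqPhi : forall x, Phi2 x T = Phi2 x (i |: T) + (O j0 x)%:R * (h j0 x T - h j0 x (i |: T)).
  move=> x; rewrite /Phi2 (bigD1 j0) //= [in X in _ = X + _](bigD1 j0) //=.
  rewrite [in X in X = _](eq_bigr (fun j => (O j x)%:R * h j x (i |: T))); last first.
    by move=> j ne; rewrite (h_other _ _ ij0 ne).
  set S := \sum_(j | j != j0) _; ring.
set W := fun x => [&& D x, O j0 x & opn j0 x T].
have hpt : forall x, (O j0 x)%:R * (h j0 x T - h j0 x (i |: T)) =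
   (O j0 x && opn j0 x T)%:R * (gs p (L j0 T) - (x i)%:R * gs p (L j0 (i |: T))).
  move=> x; rewrite /h (opn_step _ _ ij0).
  case: (O j0 x); case: (opn j0 x T); case: (x i) => /=; ring.
have -> : \sum_(x | D x) prob p x * Phi2 x T =
   \sum_(x | D x) prob p x * Phi2 x (i |: T) +
   \sum_(x | W x) prob p x * (gs p (L j0 T) - (x i)%:R * gs p (L j0 (i |: T))).
  rewrite /W -sum_mkcond -big_split /=; apply: eq_bigr => x Dx.
  by rewrite eqPhi hpt; ring.
under [X in _ <= X]eq_bigr do rewrite mulrDr.
rewrite big_split /= addrC; apply: lerD => //.
set Lt := L j0 T.
have iL : i \in Lt by rewrite mem_filter iT mem_srt ij0.
have hind : forall i', i' \in Lt -> indep W i'.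
  move=> i'; rewrite mem_filter mem_srt => /andP[i'T i't] x.
  rewrite /W /opn flip_agree; last by rewrite inE negb_and i'T.
  rewrite (hD (flip i' x) x); last first.
    by move=> j jT; rewrite flip_j //; apply: contraNneq i'T => <-.
  congr [&& _, _ & _]; apply: eq_forallb => j'; case: eqP => //= ne.
  rewrite /sat flip_agree //; apply: (not_in_other i't); exact/eqP.
have Sge0 : 0 <= \sum_(x | W x) prob p x by apply: sumr_ge0 => x _; apply: (prob_ge0 hp).
have -> : \sum_(x | W x) prob p x * (gs p Lt - (x i)%:R * gs p (L j0 (i |: T))) =
   (gs p Lt - p i * gs p (rem i Lt)) * \sum_(x | W x) prob p x.
  rewrite L_step -/Lt mulrBl [_ * gs p (rem i Lt) * _]mulrAC -(peel1 p (hind i iL)) mulr_sumr mulr_suml [X in _ = _ - X]big_mkcondr -sumrB /=.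
  apply: eq_bigr => x _.
  by case: (x i) => /=; ring.
apply: (@le_trans _ _ ((1 - \prod_(j <- Lt) p j) * \sum_(x | W x) prob p x)).
  apply: ler_wpM2r => //; apply: gs_ineq => //.
  by apply: sorted_filter; [apply: lep_trans | apply: srt_sorted].
have hsat : forall x, W x -> sat x j0 = allx x Lt.
  move=> x /and3P[_ _ /forall_inP ho]; apply/forall_inP/allP.
    by move=> hh i'; rewrite mem_filter mem_srt => /andP[_]; apply: hh.
  move=> hh i' i't; case: (boolP (i' \in T)) => i'T.
    by apply: ho; rewrite inE i'T i't.
  by apply: hh; rewrite mem_filter i'T mem_srt.
have : \sum_(x | W x) prob p x =
   \sum_(x | W x && allx x Lt) prob p x + \sum_(x | W x && ~~ sat x j0) prob p x.
  rewrite (bigID (fun x => sat x j0)) /=; congr (_ + _).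
  by apply: eq_bigl => x; case Wx: (W x) => //=; rewrite hsat.
rewrite (peel p (filter_uniq _ (srt_uniq j0)) hind) => hS.
have -> : (1 - \prod_(j <- Lt) p j) * \sum_(x | W x) prob p x =
   \sum_(x | W x && ~~ sat x j0) prob p x by rewrite mulrBl mul1r {1}hS; ring.
rewrite big_mkcond [X in _ <= X]big_mkcond /=; apply: ler_sum => x _.
rewrite /W; case Dx: (D x) => /=; last done.
case Ox: (O j0 x) => /=; last by rewrite mulr_ge0 ?(prob_ge0 hp).
case: (opn j0 x T) => /=; last by rewrite mulr_ge0 ?(prob_ge0 hp).
case: (boolP (sat x j0)) => sj /=; first by rewrite mulr_ge0 ?(prob_ge0 hp).
have -> : f x = false.
  apply/negbTE/existsPn => j; case: (eqVneq j j0) => [->//|ne].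
  by move/forallP: Ox => /(_ j); rewrite ne.
by rewrite mulr1.
Qed.


Lemma H2 T i (D : pred (input n)) : meas T D ->
  \sum_(x | D x) prob p x * Phi x T <= \sum_(x | D x) prob p x * (1 + Phi x (i |: T)).
Proof.
move=> hD.
have h2 := Phi2_step i hD.
have h1 : \sum_(x | D x) prob p x * Phi1 x T <=
          \sum_(x | D x) prob p x * ((f x)%:R + Phi1 x (i |: T)).
  apply: ler_sum => x _; apply: ler_wpM2l; [exact: (prob_ge0 hp) | exact: Phi1_step].
have -> : \sum_(x | D x) prob p x * (1 + Phi x (i |: T)) =
  \sum_(x | D x) prob p x * ((f x)%:R + Phi1 x (i |: T)) +
  \sum_(x | D x) prob p x * ((~~ f x)%:R + Phi2 x (i |: T)).
  rewrite -big_split; apply: eq_bigr => x _ /=; rewrite /Phi.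
  by case: (f x) => /=; ring.
have -> : \sum_(x | D x) prob p x * Phi x T =
  \sum_(x | D x) prob p x * Phi1 x T + \sum_(x | D x) prob p x * Phi2 x T.
  by rewrite -big_split; apply: eq_bigr => x _ /=; rewrite /Phi mulrDr.
exact: lerD.
Qed.

Lemma Phi_root x : Phi x set0 = (f x)%:R * k%:R + \sum_(j < m) (O j x)%:R * gs p (srt j).
Proof.
rewrite /Phi /Phi1.
have -> : M x set0 = 0%N.
  apply/eqP; rewrite -leqn0; apply/bigmax_leqP => j _; by rewrite set0I cards0.
congr (_ + _); first by case: (f x); rewrite /= ?mul1r ?mul0r ?subr0.
apply: eq_bigr => j _; rewrite /h.
have -> : opn j x set0 by apply/forall_inP => i; rewrite set0I inE.
congr (_ * gs p _); rewrite /L; rewrite (eq_filter (a2 := predT)) ?filter_predT //.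
by move=> i; rewrite inE.
Qed.

Lemma adaptive_lb (t : dtree n) : adaptive_strategy f t ->
  \sum_(x : input n) prob p x * Phi x set0 <= cost_adaptive f (fun _ => 1) p t.
Proof.
move=> hv.
have := tree_lb hp (@H1) H2 (t := t) (T := set0) (D := predT) _ _.
apply=> //; move=> x y _ //.
Qed.


Hypothesis hn : n = (k * m)%N.

Definition tau (i : 'I_n) : 'I_m := xchoose (hcov i).
Lemma tau_in i : i \in terms (tau i). Proof. exact: (xchooseP (hcov i)). Qed.
Lemma tau_uniq i j : i \in terms j -> tau i = j.
Proof.
move=> ij; apply/eqP; apply: contraT => ne.
by have := not_in_other (tau_in i) (j := j); rewrite eq_sym ij => /(_ ne).
Qed.

Definition rho (i : 'I_n) : nat := index i (srt (tau i)).
Lemma rho_lt i : (rho i < k)%N.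
Proof. by rewrite /rho -(size_srt (tau i)) index_mem mem_srt tau_in. Qed.

Lemma pos_lt i : (rho i * m + tau i < n)%N.
Proof. rewrite hn; have := rho_lt i; have := ltn_ord (tau i); nia. Qed.

Definition pos i : 'I_n := Ordinal (pos_lt i).

Lemma pos_inj : injective pos.
Proof.
move=> i i' /(congr1 val) /= e.
have m0 : (0 < m)%N by apply: leq_ltn_trans (ltn_ord (tau i)).
have et : tau i = tau i' :> nat.
  by have := congr1 (modn^~ m) e; rewrite /= !modnMDl !modn_small.
have er : rho i = rho i'.
  by have := congr1 (divn^~ m) e; rewrite /= !divnMDl // !divn_small // !addn0.
have et' : tau i = tau i' by apply: val_inj.
have hi : nth i (srt (tau i)) (rho i) = i by rewrite nth_index // mem_srt tau_in.
have hi' : nth i (srt (tau i')) (rho i') = i' by rewrite nth_index // mem_srt tau_in.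
by rewrite -hi -[RHS]hi' et' er.
Qed.

Definition gperm : {perm 'I_n} := perm pos_inj.
Definition sigma : {perm 'I_n} := gperm^-1.

Lemma in_prefix i (k' : 'I_n) : (i \in Defs.prefix sigma k') = (pos i < k')%N.
Proof.
apply/imsetP/idP.
  move=> [j]; rewrite inE => jk ->.
  by have := permE pos_inj (sigma j); rewrite -/gperm /sigma permKV => <-.
move=> hlt; exists (gperm i); first by rewrite inE permE.
by rewrite /sigma permK.
Qed.

Definition N (x : input n) : R := \sum_(k' < n) (if determined f x (Defs.prefix sigma k') then 0 else 1).

Lemma N_reindex (x : input n) : N x =
  \sum_i (if determined f x [set i' | (pos i' < pos i)%N] then 0 else 1).
Proof.
rewrite /N (reindex_inj (@perm_inj _ gperm)) /=; apply: eq_bigr => i _.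
have -> : Defs.prefix sigma (gperm i) = [set i' | (pos i' < pos i)%N].
  by apply/setP => i'; rewrite in_prefix inE permE.
by [].
Qed.

Lemma N_le (x : input n) : N x <= (k * m)%:R.
Proof.
rewrite /N; apply: (@le_trans _ _ (\sum_(k' < n) (1 : R))).
  by apply: ler_sum => i _; case: ifP.
by rewrite sumr_const card_ord hn.
Qed.

Lemma D4 (x : input n) (P : {set 'I_n}) :
  (forall j, exists i, [/\ i \in P, i \in terms j & ~~ x i]) -> determined f x P.
Proof.
move=> hz; apply/forallP => y; apply/implyP => /forall_inP hy.
have nf : forall z : input n, (forall i, i \in P -> z i = x i) -> f z = false.
  move=> z hzx; apply/negbTE/existsPn => j; have [i [iP ij xi]] := hz j.
  by apply/forall_inPn; exists i => //; rewrite hzx.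
rewrite (nf y) ?(nf x) // => i /hy /eqP //.
Qed.

Lemma sum_index (F : nat -> R) (s : seq 'I_n) : uniq s ->
  \sum_(i <- s) F (index i s) = \sum_(r < size s) F r.
Proof.
elim: s F => [|a s IH] F /=; first by rewrite big_nil big_ord0.
case/andP=> ans us; rewrite big_cons big_ord_recl eqxx; congr (_ + _).
rewrite big_seq_cond (eq_bigr (fun i => F (index i s).+1)); last first.
  by move=> i /andP[iin _]; rewrite ifN //; apply: contraNneq ans => ->.
by rewrite -big_seq_cond (IH (fun r => F r.+1)).
Qed.

Lemma sum_rho (F : nat -> R) : \sum_i F (rho i) = m%:R * \sum_(r < k) F r.
Proof.
rewrite (partition_big tau predT) //=.
rewrite (eq_bigr (fun _ => \sum_(r < k) F r)); last first.
  move=> j _.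
  rewrite (eq_bigl (fun i => i \in terms j)); last first.
    by move=> i; apply/eqP/idP => [<-|/tau_uniq //]; exact: tau_in.
  rewrite (eq_bigr (fun i => F (index i (srt j)))); last by move=> i ij; rewrite /rho (tau_uniq ij).
  rewrite -big_enum.
  have hpe : perm_eq (srt j) (enum (terms j)) by rewrite perm_sort.
  by rewrite -(perm_big _ hpe) sum_index ?srt_uniq // size_srt.
by rewrite sumr_const card_ord mulr_natl.
Qed.

Lemma N_bound (x : input n) : ~~ f x ->
  N x <= m%:R * \sum_(j < m) \sum_(r < k) (allx x (take r (srt j)))%:R.
Proof.
move=> nfx; rewrite N_reindex.
apply: (@le_trans _ _ (\sum_i \sum_(j < m) (allx x (take (rho i) (srt j)))%:R)).
  apply: ler_sum => i _.
  case: (boolP [exists j, allx x (take (rho i) (srt j))]) => [/existsP [j hj] | /existsPn hnn].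
    case: ifP => _; first by apply: sumr_ge0 => ? _; rewrite ler0n.
    rewrite (bigD1 j) //= hj -[X in X <= _]addr0 lerD //.
    by apply: sumr_ge0 => ? _; rewrite ler0n.
  rewrite ifT; first by apply: sumr_ge0 => ? _; rewrite ler0n.
  apply: D4 => j; have := hnn j; rewrite /allx => /allPn [i' i'in xi'].
  have i't : i' \in terms j by rewrite -mem_srt; exact: mem_take i'in.
  exists i'; split => //; rewrite inE.
  have hr : (rho i' < rho i)%N by rewrite /rho (tau_uniq i't); exact: index_ltn i'in.
  rewrite /=; have := ltn_ord (tau i'); nia.
rewrite exchange_big /= mulr_sumr; apply: ler_sum => j _.
by rewrite (sum_rho (fun r => (allx x (take r (srt j)))%:R)).
Qed.


Lemma nf_O (x : input n) j : (~~ f x) = (O j x && ~~ sat x j).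
Proof.
apply/idP/andP.
  move/existsPn => h; split; last exact: h.
  by apply/forallP => j'; apply/implyP => _; exact: h.
case=> /forallP ho ns; apply/existsPn => j'; case: (eqVneq j' j) => [->//|ne].
by have := ho j'; rewrite ne.
Qed.

Lemma indepO j i' : i' \in terms j -> indep (O j) i'.
Proof.
move=> i'j x; apply: eq_forallb => j'; case: eqP => //= ne.
rewrite /sat flip_agree //; apply: (not_in_other i'j); exact/eqP.
Qed.

Lemma allx_take (x : input n) s r : allx x s -> allx x (take r s).
Proof. by move=> /allP h; apply/allP => i /mem_take; apply: h. Qed.

Lemma expect_part j :
  \sum_(x : input n) prob p x * ((~~ f x)%:R * \sum_(r < k) (allx x (take r (srt j)))%:R) =
  \sum_(x : input n) prob p x * ((O j x)%:R * gs p (srt j)).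
Proof.
set S := \sum_(x | O j x) prob p x.
have hind : forall s : seq 'I_n, {subset s <= srt j} -> forall i, i \in s -> indep (O j) i.
  by move=> s hs i /hs; rewrite mem_srt; apply: indepO.
have hR : \sum_(x : input n) prob p x * ((O j x)%:R * gs p (srt j)) = gs p (srt j) * S.
  rewrite /S mulr_sumr [in RHS]big_mkcond /=; apply: eq_bigr => x _.
  by case: (O j x); rewrite /= ?mul1r ?mul0r ?mulr0 // mulrC.
rewrite hR.
have hall : \sum_(x | O j x && allx x (srt j)) prob p x = (\prod_(i <- srt j) p i) * S.
  by rewrite (peel p (srt_uniq j)) //; apply: hind.
have hr : forall r, \sum_(x : input n) prob p x * ((~~ f x)%:R * (allx x (take r (srt j)))%:R) =
    (\prod_(i <- take r (srt j)) p i - \prod_(i <- srt j) p i) * S.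
  move=> r.
  have ht : \sum_(x | O j x && allx x (take r (srt j))) prob p x = (\prod_(i <- take r (srt j)) p i) * S.
    rewrite (peel p (take_uniq _ (srt_uniq j))) //; apply: hind => i /mem_take //.
  rewrite mulrBl -ht -hall.
  rewrite [X in _ = X - _](bigID (fun x : input n => sat x j)) /=.
  have -> : \sum_(x | (O j x && allx x (take r (srt j))) && sat x j) prob p x =
            \sum_(x | O j x && allx x (srt j)) prob p x.
    apply: eq_bigl => x; rewrite sat_allx; case: (O j x) => //=.
    by case h: (allx x (srt j)); rewrite ?andbT ?andbF ?(allx_take r h).
  rewrite addrAC subrr add0r [in RHS]big_mkcond /=; apply: eq_bigr => x _.
  rewrite (nf_O x j); case: (O j x); case: (sat x j); case: (allx _ _) => /=; ring.
under eq_bigr do rewrite mulr_sumr mulr_sumr.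
rewrite exchange_big /=.
rewrite (eq_bigr (fun r : 'I_k => (\prod_(i <- take r (srt j)) p i - \prod_(i <- srt j) p i) * S)); last first.
  by move=> r _; rewrite -hr; apply: eq_bigr => x _; rewrite mulrA.
rewrite -mulr_suml sumrB sumr_const card_ord /gs Gs_sum size_srt mulr_natl.
by [].
Qed.

Lemma nonadaptive_ub :
  cost_nonadaptive f (fun _ => 1) p sigma <= m%:R * \sum_(x : input n) prob p x * Phi x set0.
Proof.
pose U := fun x : input n => ((f x)%:R * k%:R : R) +
   (~~ f x)%:R * \sum_(j < m) \sum_(r < k) (allx x (take r (srt j)))%:R.
apply: (@le_trans _ _ (\sum_(x : input n) prob p x * (m%:R * U x))).
  rewrite /cost_nonadaptive; apply: ler_sum => x _.
  rewrite -/(N x); apply: ler_wpM2l; first exact: (prob_ge0 hp).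
  rewrite /U; case fx: (f x) => /=.
    by rewrite mul1r mul0r addr0 -natrM mulnC N_le.
  by rewrite mul0r add0r mul1r; apply: N_bound; rewrite fx.
have -> : \sum_(x : input n) prob p x * (m%:R * U x) = m%:R * \sum_(x : input n) prob p x * U x.
  by rewrite mulr_sumr; apply: eq_bigr => x _; rewrite mulrCA.
apply: ler_wpM2l; first by rewrite ler0n.
rewrite le_eqVlt; apply/orP; left; apply/eqP.
have -> : \sum_(x : input n) prob p x * U x =
  \sum_(x : input n) prob p x * ((f x)%:R * k%:R) +
  \sum_(j < m) \sum_(x : input n) prob p x * ((~~ f x)%:R * \sum_(r < k) (allx x (take r (srt j)))%:R).
  rewrite exchange_big -big_split /=; apply: eq_bigr => x _.
  by rewrite /U mulrDr mulr_sumr; congr (_ + _); rewrite mulr_sumr; apply: eq_bigr => j _; rewrite mulr_sumr.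
under [X in _ + X = _]eq_bigr do rewrite expect_part.
rewrite exchange_big -big_split /=; apply: eq_bigr => x _.
by rewrite Phi_root mulrDr mulr_sumr.
Qed.

Theorem main_bound (t : dtree n) : adaptive_strategy f t ->
  cost_nonadaptive f (fun _ => 1) p sigma <= m%:R * cost_adaptive f (fun _ => 1) p t.
Proof.
move=> hv; apply: le_trans nonadaptive_ub _.
by apply: ler_wpM2l; [rewrite ler0n | apply: adaptive_lb].
Qed.

End DNF.

Theorem lemma2 (R : realFieldType) (n m : nat) (terms : 'I_m -> {set 'I_n})
    (p : 'I_n -> R) :
  (* terms pairwise disjoint (read-once) *)
  (forall j1 j2 : 'I_m, j1 != j2 -> [disjoint terms j1 & terms j2]) ->
  (* every variable occurs in some (hence exactly one) term *)
  (forall i : 'I_n, exists j : 'I_m, i \in terms j) ->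
  (* each term contains exactly n/m variables *)
  (forall j : 'I_m, (#|terms j| * m)%N = n) ->
  (forall i, 0 < p i < 1) ->
  exists s : {perm 'I_n},
    forall t : dtree n, adaptive_strategy (dnf terms) t ->
      cost_nonadaptive (dnf terms) (fun _ => 1) p s
        <= m%:R * cost_adaptive (dnf terms) (fun _ => 1) p t.
Proof.
move=> hdisj hcov hsize hp.
have hk : forall j : 'I_m, #|terms j| = (n %/ m)%N.
  move=> j; have m0 : (0 < m)%N by apply: leq_ltn_trans (ltn_ord j).
  by rewrite -[n in (n %/ m)%N](hsize j) mulnK.
have hn : n = (n %/ m * m)%N.
  case: (posnP n) => [->|n0]; first by rewrite div0n.
  have [j _] := hcov (Ordinal n0).
  have m0 : (0 < m)%N by apply: leq_ltn_trans (ltn_ord j).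
  by rewrite -[n in (n %/ m)%N](hsize j) mulnK // hsize.
exists (sigma p hk hcov hn) => t ht.
exact: (main_bound hp hdisj hk hcov hn ht).
Qed.
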